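(* Let $\mathbf b=(b_1,\dots,b_{k-1})$ be a sequence of non-negative integers with $|\mathbf b|=\binom k2$. The following are equivalent: (i) $\mathbf b$ is a perfect matching sequence; (ii) the coefficient of $v^{\mathbf b}=v_1^{b_1}\cdots v_{k-1}^{b_{k-1}}$ in the polynomial $V(\lambda)=\prod_{1\le i<j\le k}(\lambda_j-\lambda_i)$, where $\lambda_i:=v_i+v_{i+1}+\dots+v_{k-1}$ for $1\le i\le k$ (so $\lambda_k=0$), is non-zero; (iii) $\sum_{j=s}^t b_j\ge\binom{t-s+2}{2}$ for every $1\le s\le t\le k-1$.
   Context: Fix an integer $k\ge 2$. For a sequence $\mathbf b=(b_1,\dots,b_{k-1})$ of non-negative integers write $|\mathbf b|=\sum_i b_i$. The bipartite graph $\mathcal B_{\mathbf b}$ has upper vertex class $U=\{(j,l):1\le j\le l\le k-1\}$ and lower vertex class $D_{\mathbf b}=\{(i,t):1\le i\le k-1,\ 1\le t\le b_i\}$, with an edge between $(j,l)\in U$ and $(i,t)\in D_{\mathbf b}$ if and only if $j\le i\le l$. The sequence $\mathbf b$ is a matching sequence if $\mathcal B_{\mathbf b}$ has a matching covering all of $D_{\mathbf b}$, and a perfect matching sequence if moreover $|\mathbf b|=\binom k2$. The $v_i$ are independent variables. *)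

(* Defs.v *)
From mathcomp Require Import all_boot all_order all_algebra.
Set Implicit Arguments. Unset Strict Implicit. Unset Printing Implicit Defensive.
Import GRing.Theory.
Local Open Scope ring_scope.

(* Variables v_1..v_{n} are indexed 0-based by 'I_n (v_{m+1} <-> m). *)
Definition monom (n : nat) := {ffun 'I_n -> nat}.

(* Integer polynomials in n commuting variables, represented as formal
   (unnormalised) linear combinations of monomials. *)
Definition mpoly (n : nat) := seq (monom n * int).

Definition mon_mul n (a b : monom n) : monom n := [ffun i => (a i + b i)%N].
Definition mon_var n (i : 'I_n) : monom n := [ffun j => nat_of_bool (j == i)].
Definition mon_one n : monom n := [ffun _ => 0%N].

Definition mp_zero n : mpoly n := [::].
Definition mp_one n : mpoly n := [:: (mon_one n, 1)].
Definition mp_var n (i : 'I_n) : mpoly n := [:: (mon_var i, 1)].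
Definition mp_add n (p q : mpoly n) : mpoly n := p ++ q.
Definition mp_opp n (p : mpoly n) : mpoly n := [seq (a.1, - a.2) | a <- p].
Definition mp_sub n (p q : mpoly n) : mpoly n := mp_add p (mp_opp q).
Definition mp_mul n (p q : mpoly n) : mpoly n :=
  [seq (mon_mul a.1 b.1, a.2 * b.2) | a <- p, b <- q].

Definition mp_coef n (p : mpoly n) (m : monom n) : int :=
  \sum_(a <- p | a.1 == m) a.2.

(* lambda_i = v_i + ... + v_{k-1} (1-based); here 0-based: i : 'I_k,
   lambda i = sum of the variables with (0-based) index m >= i,
   so lambda (k-1) = 0. *)
Definition lambda (k : nat) (i : nat) : mpoly k.-1 :=
  foldr (@mp_add _) (mp_zero _)
    [seq mp_var m | m : 'I_k.-1 <- enum 'I_k.-1 & (i <= m)%N].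

Definition Vpoly (k : nat) : mpoly k.-1 :=
  foldr (@mp_mul _) (mp_one _)
    (flatten [seq [seq mp_sub (lambda k j) (lambda k i)
                     | j <- iota 0 k & (i < j)%N] | i <- iota 0 k]).

(* matching sequence: B_b has a matching covering D_b, i.e. an injective
   map from D_b = {(i,t) : t < b_i} to U = {(j,l) : j <= l} along edges
   (j <= i <= l).  All indices 0-based. *)
Definition matching_seq (n : nat) (b : 'I_n -> nat) : Prop :=
  exists f : {i : 'I_n & 'I_(b i)} -> 'I_n * 'I_n,
    injective f /\
    forall x, ((f x).1 <= tag x)%N /\ (tag x <= (f x).2)%N.

Definition perfect_matching_seq (k : nat) (b : 'I_k.-1 -> nat) : Prop :=
  matching_seq b /\ (\sum_(i < k.-1) b i)%N = 'C(k, 2).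

(* Main.v *)
Require Import Defs.
From mathcomp Require Import all_boot all_order all_algebra zify.
Set Implicit Arguments. Unset Strict Implicit. Unset Printing Implicit Defensive.

Module GPart.
Import GRing.Theory.
Local Open Scope nat_scope.

Lemma all2_cat2 (S T : Type) (r : S -> T -> bool) s1 s2 t1 t2 :
  size s1 = size t1 -> all2 r (s1 ++ s2) (t1 ++ t2) = all2 r s1 t1 && all2 r s2 t2.
Proof. elim: s1 t1 => [|x s1 IH] [|y t1] //= [e]. by rewrite IH // andbA. Qed.

Lemma all2_size (S T : Type) (r : S -> T -> bool) s t : all2 r s t -> size s = size t.
Proof. by elim: s t => [|x s IH] [|y t] //= /andP[_ /IH ->]. Qed.

Lemma all2_mapl (S T : Type) (g : S -> S) (r r' : S -> T -> bool) s t :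
  all2 r (map g s) t -> (forall x p, r (g x) p -> r' x p) -> all2 r' s t.
Proof.
move=> h H; elim: s t h => [|x s IH] [|y t] //= /andP[h1 h2].
by rewrite (H _ _ h1) (IH _ h2).
Qed.

Lemma sub_in_cnt (T : eqType) (a1 a2 : pred T) s :
  (forall x, x \in s -> a1 x -> a2 x) -> count a1 s <= count a2 s.
Proof.
elim: s => //= x s IH H; apply: leq_add.
  by case h1: (a1 x) => //; rewrite (H x (mem_head _ _) h1).
by apply: IH => y ys; apply: H; rewrite inE ys orbT.
Qed.

Lemma argmin_ex (T : eqType) (P : pred T) (w : T -> nat) s :
  has P s -> exists x, [/\ x \in s, P x & forall y, y \in s -> P y -> w x <= w y].
Proof.
elim: s => [|a s IH] //= H.
case: (boolP (has P s)) => [/IH [x [xs Px hx]]|hn].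
  case: (boolP (P a && (w a <= w x))) => [/andP[Pa le]|h].
    exists a; split; rewrite ?mem_head //.
    move=> y; rewrite inE => /orP[/eqP->//|ys Py]; exact: leq_trans le (hx y ys Py).
  exists x; split; rewrite ?inE ?xs ?orbT //.
  move=> y; rewrite inE => /orP[/eqP->|ys Py]; last exact: hx.
  by move=> Pa; move: h; rewrite Pa /= -ltnNge => /ltnW.
have Pa : P a by move: H; rewrite (negbTE hn) orbF.
exists a; split; rewrite ?mem_head //.
move=> y; rewrite inE => /orP[/eqP->//|ys Py].
by move/hasPn: hn => /(_ y ys); rewrite Py.
Qed.

Lemma sum_pred1 s t s0 : \sum_(s <= p < t) (p == s0) = (s <= s0 < t).
Proof.
rewrite (eq_bigr (fun p => if p == s0 then 1 else 0)); last by move=> p _; case: eqP.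
by rewrite -big_mkcond sum1_count count_uniq_mem ?iota_uniq // mem_index_iota.
Qed.

Lemma sum_split (b : nat -> nat) s s0 t : s <= s0 < t ->
  \sum_(s <= p < t) b p = \sum_(s <= p < s0) b p + b s0 + \sum_(s0.+1 <= p < t) b p.
Proof.
move=> /andP[h1 h2]; rewrite (big_cat_nat h1 (ltnW h2)) /= (big_ltn h2).
by rewrite addnA.
Qed.

Definition mu (L : seq (nat*nat)) := size L + sumn [seq x.2 - x.1 | x <- L].
Definition contained s t (x : nat*nat) := (s <= x.1) && (x.2 <= t).
Definition shf s0 (y : nat*nat) := if y.1 == s0 then (s0.+1, y.2) else y.

Definition c1 s0 (l : seq (nat*nat)) := count (fun y : nat*nat => y.1 == s0) l.
Lemma shift_len s0 l : (forall y, y \in l -> y.1 = s0 -> s0 < y.2) ->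
  sumn [seq z.2 - z.1 | z <- map (shf s0) l] + c1 s0 l
  = sumn [seq z.2 - z.1 | z <- l].
Proof.
rewrite /c1.
elim: l => //= y l IH H.
have := IH (fun z zl => H z (@mem_behead _ (y :: l) _ zl)).
have := H y (mem_head _ _).
rewrite /shf; case: eqP => /= [e|_] h1 h2; last lia.
have := h1 e; rewrite e; lia.
Qed.

Lemma greedy_aux N : forall (L : seq (nat*nat)) (b : nat -> nat),
  mu L < N -> all (fun x => x.1 < x.2) L ->
  (forall s t, count (contained s t) L <= \sum_(s <= p < t) b p) ->
  exists ps : seq nat, all2 (fun x p => (x.1 <= p) && (p < x.2)) L ps /\
     forall p, count_mem p ps <= b p.
Proof.
elim: N => [|N IH] L b // hmu hL hc.
case: (boolP (has predT L)) => [hne|]; last first.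
  by rewrite has_predT lt0n negbK size_eq0 => /eqP->; exists [::].
have [x0 [x0L _ hx0]] := argmin_ex (fun x : nat*nat => x.1) hne.
set s0 := x0.1.
case: (posnP (b s0)) => hb0.
-
  have no1 : forall y, y \in L -> y.1 = s0 -> s0.+1 < y.2.
    move=> y yL e; rewrite ltnNge; apply/negP => le.
    have : 0 < count (contained s0 s0.+1) L.
      by rewrite -has_count; apply/hasP; exists y => //; rewrite /contained e leqnn.
    by move: (hc s0 s0.+1); rewrite big_nat1 hb0 leqn0 => /eqP ->.
  have hL' : all (fun x => x.1 < x.2) (map (shf s0) L).
    rewrite all_map; apply/allP => y yL /=; rewrite /shf; case: eqP => [e|_] /=.
      exact: (no1 y yL e).
    exact: (allP hL).
  have hmu' : mu (map (shf s0) L) < N.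
    have e := shift_len (fun y yL e => ltnW (no1 y yL e)).
    have : 0 < c1 s0 L.
      by rewrite /c1 -has_count; apply/hasP; exists x0.
    move=> hpos; move: hmu; rewrite /mu size_map -e; lia.
  have hc' : forall s t, count (contained s t) (map (shf s0) L) <= \sum_(s <= p < t) b p.
    move=> s t; rewrite count_map.
    case: (eqVneq s s0.+1) => [->|ne].
      apply: leq_trans (_ : count (contained s0 t) L <= _).
        apply: sub_count => y; rewrite /contained /shf /=; case: eqP => [->|ne'] /=.
          by case/andP => _ ->; rewrite andbT.
        by move/andP=> [h1 h2]; rewrite h2 andbT ltnW.
      apply: leq_trans (hc s0 t) _.
      case: (ltnP s0 t) => h; first by rewrite big_ltn // hb0.
      by rewrite big_geq.
    rewrite (@eq_in_count _ _ (contained s t)); first exact: hc.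
    move=> y yL /=; rewrite /contained /shf; case: eqP => //= e.
    by rewrite e leq_eqVlt (negbTE ne) /= ltnS.
  have [ps [h1 h2]] := IH _ b hmu' hL' hc'.
  exists ps; split => //; apply: all2_mapl h1 _ => y p.
  rewrite /shf; case: eqP => //= ->; by move/andP=> [/ltnW -> ->].
-
  have hx : has (fun y : nat*nat => y.1 == s0) L by apply/hasP; exists x0.
  have [x [xL /eqP xs0 hx']] := argmin_ex (fun y : nat*nat => y.2) hx.
  have [L1 [L2 eL]] : exists L1 L2, L = L1 ++ x :: L2.
    by case/splitPr: xL => L1 L2; exists L1, L2.
  set b' := fun p => b p - (p == s0).
  have hmu' : mu (L1 ++ L2) < N.
    move: hmu; rewrite eL /mu !size_cat !map_cat !sumn_cat /=; lia.
  have hL' : all (fun x => x.1 < x.2) (L1 ++ L2).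
    by move: hL; rewrite eL !all_cat /= => /and3P[-> _ ->].
  have hc' : forall s t, count (contained s t) (L1 ++ L2) <= \sum_(s <= p < t) b' p.
    move=> s t.
    have e1 : count (contained s t) L = count (contained s t) (L1 ++ L2) + contained s t x.
      by rewrite eL !count_cat /=; lia.
    have e2 : \sum_(s <= p < t) b' p + (s <= s0 < t) = \sum_(s <= p < t) b p.
      rewrite -sum_pred1 -big_split /=; apply: eq_bigr => p _; rewrite /b'.
      case: (eqVneq p s0) => [->|ne] /=; last by rewrite subn0 addn0.
      by rewrite addn1 subn1 prednK.
    have := hc s t.
    case: (boolP (s <= s0 < t)) => hin; last by move: e2; rewrite (negbTE hin) addn0 => <-; lia.
    case: (boolP (contained s t x)) => cx; first by move: e2 e1; rewrite hin cx addn1 => <- ->; lia.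
    have hxt : t < x.2.
      by move: cx; rewrite /contained xs0; case/andP: hin => -> _ /=; rewrite -ltnNge.
    have : count (contained s t) L <= \sum_(s0.+1 <= p < t) b p.
      apply: leq_trans (hc s0.+1 t).
      apply: sub_in_cnt => y yL; rewrite /contained => /andP[h1 h2].
      apply/andP; split => //; rewrite ltn_neqAle (hx0 y yL isT) andbT.
      apply/eqP => e; have := hx' y yL; rewrite -e eqxx => /(_ isT) /leq_trans /(_ h2); by rewrite leqNgt hxt.
    move: e2 e1 (sum_split b hin) hb0; rewrite hin (negbTE cx) addn1 addn0; lia.
  have [ps' [h1 h2]] := IH _ b' hmu' hL' hc'.
  have sz : size ps' = size L1 + size L2 by rewrite -(all2_size h1) size_cat.
  have sz1 : size (take (size L1) ps') = size L1 by rewrite size_takel // sz leq_addr.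
  exists (take (size L1) ps' ++ s0 :: drop (size L1) ps'); split.
    move: h1; rewrite -{1}(cat_take_drop (size L1) ps') !all2_cat2 // eL /=.
    move=> /andP[a1 a2]; rewrite all2_cat2 //=; apply/andP; split => //; apply/andP; split => //.
    rewrite xs0 leqnn /=.
    by move: hL; rewrite eL all_cat /= xs0 => /and3P[_ -> _].
  move=> p; have := h2 p; rewrite -{1}(cat_take_drop (size L1) ps') !count_cat /= /b'.
  case: (eqVneq s0 p) => [<-|ne]; rewrite ?eqxx; last by rewrite /= subn0 add0n.
  rewrite /= subn1 add1n; move: hb0; lia.
Qed.

Lemma greedy (L : seq (nat*nat)) (b : nat -> nat) :
  all (fun x => x.1 < x.2) L ->
  (forall s t, count (contained s t) L <= \sum_(s <= p < t) b p) ->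
  exists ps : seq nat, all2 (fun x p => (x.1 <= p) && (p < x.2)) L ps /\
     forall p, count_mem p ps <= b p.
Proof. exact: (@greedy_aux (mu L).+1). Qed.

End GPart.
Import GPart.

Module PPart.
Import GRing.Theory.


Lemma sum_pos_ex (I : eqType) (s : seq I) (P : pred I) (F : I -> nat) :
  (0 < \sum_(i <- s | P i) F i)%N -> exists i, [/\ i \in s, P i & (0 < F i)%N].
Proof.
elim: s => [|a s IH]; first by rewrite big_nil.
rewrite big_cons; case: (boolP (P a)) => Pa.
  case: (posnP (F a)) => [->|h _]; last by exists a; rewrite mem_head.
  by rewrite add0n => /IH [i [si Pi Fi]]; exists i; rewrite inE si orbT.
by move=> /IH [i [si Pi Fi]]; exists i; rewrite inE si orbT.
Qed.

Lemma le_sum_term (I : eqType) (s : seq I) (P : pred I) (F : I -> nat) i :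
  i \in s -> P i -> (F i <= \sum_(j <- s | P j) F j)%N.
Proof.
elim: s => [|a s IH] //; rewrite inE big_cons => /orP[/eqP<- ->|si Pi].
  exact: leq_addr.
by case: (P a); rewrite ?(leq_trans (IH si Pi)) ?leq_addl.
Qed.

Lemma PoszSum (I : Type) (s : seq I) (P : pred I) (F : I -> nat) :
  Posz (\sum_(i <- s | P i) F i)%N = (\sum_(i <- s | P i) (F i)%:Z)%R.
Proof.
elim: s => [|a s IH]; first by rewrite !big_nil.
by rewrite !big_cons; case: (P a); rewrite ?PoszD IH.
Qed.

Section Poly.
Variable n : nat.
Local Open Scope ring_scope.

Definition mon_dec (m : monom n) (p : 'I_n) : monom n :=
  [ffun q => if q == p then (m q).-1 else m q].

Lemma mon_mul_var_eq (p : 'I_n) (x m : monom n) :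
  (mon_mul (mon_var p) x == m) = (0 < m p)%N && (x == mon_dec m p).
Proof.
apply/eqP/andP => [<-|[hp /eqP ->]].
  split; first by rewrite !ffunE eqxx.
  by apply/eqP/ffunP => q; rewrite !ffunE; case: eqP => [->|]; rewrite ?ffunE ?eqxx.
apply/ffunP => q; rewrite !ffunE; case: (eqVneq q p) => [->|ne] /=.
  by rewrite add1n prednK.
by rewrite add0n.
Qed.

Lemma coef_cat (p q : mpoly n) m : mp_coef (p ++ q) m = mp_coef p m + mp_coef q m.
Proof. by rewrite /mp_coef big_cat. Qed.

Lemma coef_mul_cat (p1 p2 q : mpoly n) m :
  mp_coef (mp_mul (p1 ++ p2) q) m = mp_coef (mp_mul p1 q) m + mp_coef (mp_mul p2 q) m.
Proof. by rewrite /mp_mul allpairs_cat coef_cat. Qed.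

Lemma coef_mul_opp (p q : mpoly n) m :
  mp_coef (mp_mul (mp_opp p) q) m = - mp_coef (mp_mul p q) m.
Proof.
elim: p => [|a p IH]; first by rewrite /mp_coef /= big_nil oppr0.
rewrite /= -cat1s -[a :: p]cat1s !coef_mul_cat IH opprD; congr (_ + _).
rewrite /mp_mul /mp_coef /= !cats0 !big_map /= -sumrN; apply: eq_bigr => x _.
by rewrite mulNr.
Qed.

Definition Xc (r : mpoly n) (m : monom n) (q : 'I_n) : int :=
  if (0 < m q)%N then mp_coef r (mon_dec m q) else 0.

Lemma coef_mul_var (p : 'I_n) c (q : mpoly n) m :
  mp_coef (mp_mul [:: (mon_var p, c)] q) m = c * Xc q m p.
Proof.
rewrite /mp_mul /= cats0 /mp_coef big_map /=.
rewrite (eq_bigl (fun b => (0 < m p)%N && (b.1 == mon_dec m p))); last first.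
  by move=> b /=; rewrite mon_mul_var_eq.
rewrite /Xc; case h: (0 < m p)%N => /=; first by rewrite mulr_sumr.
by rewrite big_pred0 ?mulr0.
Qed.

Lemma coef_mul_vars (qs : seq 'I_n) (r : mpoly n) m :
  mp_coef (mp_mul (foldr (@mp_add _) (mp_zero _) (map (@mp_var _) qs)) r) m
  = \sum_(q <- qs) Xc r m q.
Proof.
elim: qs => [|q qs IH]; first by rewrite big_nil /mp_coef /= big_nil.
rewrite big_cons /= -IH /mp_add /mp_var -cat1s coef_mul_cat coef_mul_var mul1r //.
Qed.

End Poly.

Definition Fk k (x : nat * nat) : mpoly k.-1 := mp_sub (lambda k x.2) (lambda k x.1).

Lemma coef_lambda k j (r : mpoly k.-1) m :
  mp_coef (mp_mul (lambda k j) r) m = (\sum_(q <- enum 'I_k.-1 | (j <= q)%N) Xc r m q)%R.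
Proof. by rewrite /lambda coef_mul_vars big_filter. Qed.

Lemma coef_F k i j (r : mpoly k.-1) m : (i <= j)%N ->
  mp_coef (mp_mul (Fk k (i, j)) r) m
  = (- \sum_(q <- enum 'I_k.-1 | (i <= q)%N && (q < j)%N) Xc r m q)%R.
Proof.
move=> hij.
rewrite /Fk /mp_sub /mp_add coef_mul_cat coef_mul_opp !coef_lambda /=.
rewrite (bigID (fun q : 'I_k.-1 => (q < j)%N) (fun q : 'I_k.-1 => (i <= q)%N)) /=.
rewrite (eq_bigl (fun q : 'I_k.-1 => (j <= q)%N) _ (r := enum _) (P1 := fun q : 'I_k.-1 => (i <= q)%N && ~~ (q < j)%N)); last first.
  move=> q /=; rewrite -leqNgt; apply/andP/idP => [[]//|h]; split => //.
  exact: leq_trans hij h.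
by rewrite opprD addrCA subrr addr0.
Qed.

Fixpoint Nc n (L : seq (nat*nat)) (m : monom n) {struct L} : nat :=
  if L is x :: L' then
    \sum_(q <- enum 'I_n | (x.1 <= q) && (q < x.2))
       (if (0 < m q)%N then Nc L' (mon_dec m q) else 0)
  else (m == mon_one n).

Lemma coefV k (L : seq (nat*nat)) m : all (fun x => x.1 <= x.2)%N L ->
  mp_coef (foldr (@mp_mul _) (mp_one _) (map (Fk k) L)) m
  = ((-1) ^+ (size L) * (Nc L m)%:Z)%R.
Proof.
elim: L m => [|[i j] L IH] m /=.
  move=> _; rewrite /mp_coef big_cons big_nil /= addr0 mul1r eq_sym.
  by case: (m == mon_one _).
move=> /andP[hij hL]; rewrite coef_F // PoszSum mulr_sumr -sumrN.
apply: eq_bigr => q _; rewrite /Xc; case: ifP => _.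
  by rewrite IH // exprS mulN1r mulNr.
by rewrite mulr0 oppr0.
Qed.

Lemma Nc_pos n (L : seq (nat*nat)) (m : monom n) : all (fun x => x.2 <= n)%N L ->
  (0 < Nc L m)%N <-> exists ps : seq nat,
     all2 (fun x p => (x.1 <= p) && (p < x.2))%N L ps /\
     forall q : 'I_n, count_mem (val q) ps = m q.
Proof.
elim: L m => [|x L IH] m /= hL.
  split.
    move=> h; exists [::]; split => // q.
    have /eqP -> : m == mon_one n by case: (m == mon_one n) h.
    by rewrite ffunE.
  move=> [[|p ps] [//= _ hc]].
  have -> : m = mon_one n by apply/ffunP => q; rewrite -hc ffunE.
  by rewrite eqxx.
case/andP: hL => hx hL; split.
  move/sum_pos_ex => [q [_ /andP[h1 h2]]]; case: ifP => // hq /(IH _ hL) [ps [a c]].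
  exists (val q :: ps); split; first by rewrite /= h1 h2 a.
  move=> r /=; rewrite c ffunE; case: (eqVneq r q) => [->|ne]; rewrite ?eqxx.
    by rewrite add1n prednK.
  have : val q != val r by rewrite eq_sym.
  by move/negbTE => ->.
move=> [[|p ps] [] //= /andP[/andP[h1 h2] a] c].
have pn : (p < n)%N := leq_trans h2 hx.
set q := Ordinal pn.
have hq : (0 < m q)%N by rewrite -c /= eqxx.
have : (0 < Nc L (mon_dec m q))%N.
  apply/(IH _ hL); exists ps; split => // r; rewrite ffunE -c /=.
  case: (eqVneq r q) => [->|ne] /=; first by rewrite eqxx.
  have : p != val r by move: ne; apply: contra => /eqP e; apply/eqP/val_inj.
  by move/negbTE => ->.
move=> hN; apply: leq_trans hN _.
have := @le_sum_term _ (enum 'I_n) (fun q : 'I_n => (x.1 <= q) && (q < x.2))%N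
  (fun q => if (0 < m q)%N then Nc L (mon_dec m q) else 0%N) q (mem_enum _ q).
by rewrite hq h1 h2 => /(_ isT).
Qed.

End PPart.
Import PPart.

Module LPart.
Import GRing.Theory.
Local Open Scope nat_scope.

Definition Lst k : seq (nat*nat) :=
  flatten [seq [seq (i,j) | j <- iota 0 k & (i < j)] | i <- iota 0 k].

Lemma Vpoly_eq k : Vpoly k = foldr (@mp_mul _) (mp_one _) (map (Fk k) (Lst k)).
Proof.
rewrite /Vpoly /Lst map_flatten -map_comp; congr (foldr _ _ (flatten _)).
by apply: eq_map => i /=; rewrite -map_comp.
Qed.

Lemma mem_Lst k (x : nat * nat) : (x \in Lst k) = (x.1 < x.2 < k).
Proof.
case: x => i j /=; apply/flattenP/idP.
  move=> [s /mapP[i' hi' ->]] /mapP[j' hj' [-> ->]].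
  move: hi' hj'; rewrite mem_filter !mem_iota /= !add0n => _ /andP[-> ->].
  by [].
move=> /andP[hij hjk]; exists [seq (i,j) | j <- iota 0 k & (i < j)].
  by apply/mapP; exists i => //; rewrite mem_iota add0n (ltn_trans hij hjk).
by apply/mapP; exists j => //; rewrite mem_filter hij mem_iota add0n hjk.
Qed.

Lemma uniq_Lst k : uniq (Lst k).
Proof.
have -> : Lst k = [seq (i, j) | i <- iota 0 k, j <- [seq j <- iota 0 k | i < j]] by [].
apply: allpairs_uniq_dep.
- exact: iota_uniq.
- by move=> x _; rewrite filter_uniq ?iota_uniq.
- by move=> [i1 j1] [i2 j2] _ _ /= [-> ->].
Qed.

Lemma count_iota_range a b k :
  count (fun j => (a <= j) && (j < b)) (iota 0 k) = minn b k - a.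
Proof.
elim: k => [|k IH]; first by rewrite minn0.
rewrite -addn1 iotaD count_cat IH /= add0n addn0.
by case: (leqP a k) => h1; case: (ltnP k b) => h2 /=; lia.
Qed.

Lemma sum_tri s u : \sum_(s <= i < u.+1) (u - i) = 'C(u.+1 - s, 2).
Proof.
case: (leqP s u) => hs; last first.
  by rewrite big_geq // (_ : u.+1 - s = 0) ?bin0n //; lia.
rewrite big_nat_rev /=.
rewrite (eq_big_nat _ _ (F2 := fun i => i - s)); last first.
  by move=> i /andP[h1 h2]; lia.
rewrite -{1}[s]add0n big_addn.
rewrite (eq_big_nat _ _ (F2 := fun i => i)); last by move=> i _; lia.
by rewrite bin2_sum.
Qed.

Lemma count_Lst k s u : u < k -> count (contained s u) (Lst k) = 'C(u.+1 - s, 2).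
Proof.
move=> uk.
rewrite /Lst count_flatten -map_comp.
have E : forall i, count (contained s u) [seq (i,j) | j <- iota 0 k & i < j]
                   = (if s <= i then u - i else 0).
  move=> i; rewrite count_map count_filter.
  case: (leqP s i) => hs.
    rewrite (@eq_count _ _ (fun j => (i.+1 <= j) && (j < u.+1))).
      by rewrite count_iota_range; lia.
    by move=> x /=; rewrite /contained /= hs /= andbC ltnS.
  rewrite (@eq_count _ _ pred0) ?count_pred0 //.
  by move=> x /=; rewrite /contained /= leqNgt hs.
rewrite (eq_map E) sumnE big_map.
have -> : k = u.+1 + (k - u.+1) by lia.
rewrite iotaD big_cat add0n.
rewrite (big1_seq (iota u.+1 (k - u.+1))) ?addn0; last first.
  move=> i /andP[_]; rewrite mem_iota => /andP[h _]; case: ifP => // _.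
  by apply/eqP; rewrite subn_eq0; exact: ltnW.
rewrite -sum_tri.
change (\sum_(i <- iota 0 u.+1) (if s <= i then u - i else 0) + 0 = \sum_(s <= i < u.+1) (u - i)).
rewrite addn0.
case: (leqP s u) => hs; last first.
  rewrite [RHS]big_geq //. apply: big1_seq => i /andP[_].
  rewrite mem_iota => /andP[_ h]; case: ifP => // hsi.
  by move: (leq_ltn_trans hsi h); rewrite add0n ltnS leqNgt hs.
rewrite -[iota 0 u.+1]/(index_iota 0 u.+1) (big_cat_nat (n := s)) //= ?(leq_trans hs) //.
rewrite big1_seq ?add0n; last first.
  by move=> i /andP[_]; rewrite mem_index_iota => /andP[_ h]; case: ifP => //; lia.
by apply: eq_big_nat => i /andP[h _]; rewrite h.
Qed.

End LPart.
Import LPart.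

Module MPart.
Import GRing.Theory.

Local Open Scope nat_scope.

Lemma all2_all (S T : eqType) (r : S -> T -> bool) (Q : pred T) L ps :
  all2 r L ps -> (forall x p, x \in L -> r x p -> Q p) -> all Q ps.
Proof.
elim: L ps => [|x L IH] [|p ps] //= /andP[h1 h2] H.
rewrite (H x p (mem_head _ _) h1) (IH _ h2) // => y q yL.
by apply: H; rewrite inE yL orbT.
Qed.

Lemma all2_count (S T : Type) (r : S -> T -> bool) (P : pred S) (Q : pred T) L ps :
  all2 r L ps -> (forall x p, r x p -> P x -> Q p) -> count P L <= count Q ps.
Proof.
elim: L ps => [|x L IH] [|p ps] //= /andP[h1 h2] H.
apply: leq_add; last exact: IH.
by case hP: (P x) => //; rewrite (H x p h1 hP).
Qed.

Section Main.
Variable k' : nat.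
Local Notation n := k'.+1.
Local Notation k := k'.+2.
Variable b : 'I_n -> nat.

Definition PS (ps : seq nat) :=
  all2 (fun x p => (x.1 <= p) && (p < x.2)) (Lst k) ps /\
  forall q : 'I_n, count_mem (val q) ps = b q.

Lemma Lst_bound x : x \in Lst k -> x.1 < x.2 /\ x.2 <= n.
Proof. by rewrite mem_Lst => /andP[-> h]. Qed.

Lemma ps_bound ps : all2 (fun x p => (x.1 <= p) && (p < x.2)) (Lst k) ps ->
  all (fun p => p < n) ps.
Proof.
move=> h; apply: all2_all h _ => x p /Lst_bound [_ h2] /andP[_ h3].
exact: leq_trans h3 h2.
Qed.

Lemma sum_count (P : pred nat) ps : all (fun p => p < n) ps ->
  \sum_(q < n | P q) count_mem (val q) ps = count P ps.
Proof.
elim: ps => [|p ps IH] /=; first by move=> _; rewrite big1.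
case/andP => hp hps; rewrite big_split /= IH //; congr (_ + _).
case: (boolP (P p)) => Pp.
  rewrite (bigD1 (Ordinal hp)) //= eqxx big1 // => q /andP[_ ne].
  suff -> : (p == val q) = false by [].
  by apply/negbTE; apply: contra ne => /eqP e; apply/eqP/val_inj; rewrite /= e.
rewrite big1 // => q Pq.
suff -> : (p == val q) = false by [].
by apply/negbTE/eqP => e; move: Pp; rewrite e Pq.
Qed.

Lemma Lst_le : all (fun x => x.1 <= x.2) (Lst k).
Proof. by apply/allP => x /Lst_bound [h _]; exact: ltnW. Qed.

Lemma Lst_lt : all (fun x => x.1 < x.2) (Lst k).
Proof. by apply/allP => x /Lst_bound [h _]. Qed.

Lemma Lst_bn : all (fun x => x.2 <= n) (Lst k).
Proof. by apply/allP => x /Lst_bound [_ h]. Qed.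

Lemma poly_iff : (mp_coef (Vpoly k) [ffun i => b i] != 0)%R <-> exists ps, PS ps.
Proof.
rewrite Vpoly_eq coefV ?Lst_le // mulf_eq0 signr_eq0 /=.
have e : forall N : nat, (Posz N != 0%R) = (0 < N).
  by move=> N; rewrite lt0n.
rewrite e; split => [h | [ps [h1 h2]]].
  move/(Nc_pos _ Lst_bn): h => [ps [h1 h2]]; exists ps; split => // q.
  by rewrite h2 ffunE.
by apply/(Nc_pos _ Lst_bn); exists ps; split => // q; rewrite h2 ffunE.
Qed.

Lemma ps_iii ps : PS ps -> forall s t : 'I_n, s <= t ->
  'C(t - s + 2, 2) <= \sum_(i < n | s <= i <= t) b i.
Proof.
move=> [h1 h2] s t st.
rewrite (eq_bigr (fun i => count_mem (val i) ps)); last by move=> i _; rewrite h2.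
rewrite (@sum_count (fun j => s <= j <= t)) ?(ps_bound h1) //.
have tk : t.+1 < k by rewrite ltnS ltn_ord.
have -> : t - s + 2 = t.+2 - s by lia.
rewrite -(count_Lst s tk).
apply: (all2_count h1) => x p /andP[h3 h4] /andP[h5 h6].
by rewrite (leq_trans h5 h3) -ltnS (leq_trans h4 h6).
Qed.

Lemma sum_le_eq (F G : 'I_n -> nat) : (forall q, F q <= G q) ->
  \sum_(q < n) F q = \sum_(q < n) G q -> forall q, F q = G q.
Proof.
move=> hle heq q.
have e : \sum_(q < n) G q = \sum_(q < n) F q + \sum_(q < n) (G q - F q).
  rewrite -big_split /=; apply: eq_bigr => i _; symmetry; exact: subnKC.
have : \sum_(q < n) (G q - F q) = 0 by move: e; rewrite heq; lia.
rewrite (bigD1 q) //= => /eqP; rewrite addn_eq0 subn_eq0 => /andP[h _].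
by apply/eqP; rewrite eqn_leq hle h.
Qed.

Lemma size_Lst : size (Lst k) = 'C(k, 2).
Proof.
rewrite -(count_predT (Lst k)) -(@eq_in_count _ (contained 0 n)).
  by rewrite count_Lst // subn0.
by move=> x /Lst_bound [_ h]; rewrite /contained h.
Qed.

Lemma iii_ps : \sum_(i < n) b i = 'C(k, 2) ->
  (forall s t : 'I_n, s <= t -> 'C(t - s + 2, 2) <= \sum_(i < n | s <= i <= t) b i) ->
  exists ps, PS ps.
Proof.
move=> hb hiii.
pose bb p := b (inord p).
have hc : forall s t, count (contained s t) (Lst k) <= \sum_(s <= p < t) bb p.
  move=> s t; set t' := minn t n.
  have e1 : count (contained s t) (Lst k) = count (contained s t') (Lst k).
    by apply: eq_in_count => x /Lst_bound [_ h]; rewrite /contained leq_min h andbT.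
  have t'k : t' < k by rewrite ltnS geq_minr.
  rewrite e1 count_Lst //.
  case: (ltnP s t') => hst; last by rewrite bin_small //; lia.
  have sn : s < n by apply: leq_trans hst (geq_minr _ _).
  have tn : t'.-1 < n by have := geq_minr t n; rewrite -/t'; lia.
  have := hiii (Ordinal sn) (Ordinal tn) ltac:(simpl; lia).
  rewrite /= (_ : t'.-1 - s + 2 = t'.+1 - s); last by lia.
  move/leq_trans; apply.
  have t't : t' <= t by apply: geq_minl.
  rewrite (big_cat_nat (ltnW hst) t't) /=.
  apply: leq_trans (leq_addr _ _).
  rewrite big_geq_mkord (big_ord_widen_cond n) ?geq_minr //.
  apply: eq_leq; apply: eq_big => [i|i _]; last by rewrite /bb inord_val.
  by rewrite -[i <= t'.-1]ltnS prednK // (leq_ltn_trans (leq0n s) hst).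
have [ps [h1 h2]] := greedy Lst_lt hc.
exists ps; split => //.
have hps := ps_bound h1.
apply: sum_le_eq.
  by move=> q; have := h2 q; rewrite /bb inord_val.
by rewrite (@sum_count predT) // count_predT -(all2_size h1) size_Lst hb.
Qed.

Lemma all2_nth (S T : Type) (r : S -> T -> bool) s t x0 y0 i :
  all2 r s t -> i < size s -> r (nth x0 s i) (nth y0 t i).
Proof.
elim: s t i => [|x s IH] [|y t] [|i] //= /andP[h1 h2]; first by [].
by move=> hi; apply: IH.
Qed.

Lemma all2_map_r (S T : Type) (r : S -> T -> bool) (g : S -> T) s :
  all2 r s (map g s) = all (fun x => r x (g x)) s.
Proof. by elim: s => //= x s ->. Qed.

Definition conv (x : nat * nat) : 'I_n * 'I_n := (inord x.1, inord x.2.-1).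

Lemma convK x : x \in Lst k -> ((conv x).1 : nat) = x.1 /\ ((conv x).2 : nat) = x.2.-1.
Proof.
move=> /Lst_bound [h1 h2]; rewrite /conv /= !inordK //.
  by rewrite prednK ?(leq_ltn_trans (leq0n _) h1).
exact: leq_trans h1 h2.
Qed.

Lemma conv_inj : {in Lst k &, injective conv}.
Proof.
move=> x y xL yL e.
have [a1 a2] := convK xL; have [c1 c2] := convK yL.
have [x1 _] := Lst_bound xL; have [y1 _] := Lst_bound yL.
have e1 : x.1 = y.1 by rewrite -a1 -c1 e.
have e2 : x.2.-1 = y.2.-1 by rewrite -a2 -c2 e.
case: x y e1 e2 x1 y1 {xL yL a1 a2 c1 c2 e} => [x1' x2'] [y1' y2'] /= -> e2 h1 h2.
by congr pair; lia.
Qed.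

Lemma fiber_card q :
  #|[set d : {i : 'I_n & 'I_(b i)} | tag d == q]| = b q.
Proof.
have -> : [set d : {i : 'I_n & 'I_(b i)} | tag d == q] =
          [set Tagged (fun i => 'I_(b i)) t | t : 'I_(b q)].
  apply/setP => d; rewrite inE; apply/eqP/imsetP.
    by case: d => i t /= e; subst i; exists t.
  by move=> [t _ ->].
rewrite card_imset ?card_ord //.
by move=> t1 t2 /eqP; rewrite eq_Tagged => /eqP.
Qed.

Lemma ps_match ps : PS ps -> matching_seq b.
Proof.
move=> [h1 h2].
pose filt (i : 'I_n) := [seq r <- iota 0 (size ps) | nth 0 ps r == val i].
have sfilt : forall i, size (filt i) = b i.
  move=> i; rewrite size_filter -h2.
  rewrite -[in RHS](mkseq_nth 0 ps) /mkseq count_map.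
  by apply: eq_count => r.
have ufilt : forall i, uniq (filt i) by move=> i; rewrite filter_uniq ?iota_uniq.
pose idx (d : {i : 'I_n & 'I_(b i)}) := nth 0 (filt (tag d)) (tagged d).
have idxP : forall d, idx d < size ps /\ nth 0 ps (idx d) = val (tag d).
  move=> d; have : idx d \in filt (tag d) by rewrite mem_nth // sfilt ltn_ord.
  by rewrite mem_filter mem_iota add0n => /andP[/eqP -> /andP[_ ->]].
have szL : size (Lst k) = size ps by apply: all2_size h1.
pose x_of d := nth (0,0) (Lst k) (idx d).
have xL : forall d, x_of d \in Lst k.
  by move=> d; apply: mem_nth; rewrite szL; case: (idxP d).
have xP : forall d, ((x_of d).1 <= tag d) && (tag d < (x_of d).2).
  move=> d; have [i1 i2] := idxP d; rewrite -i2.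
  by apply: all2_nth h1 _; rewrite szL.
exists (fun d => conv (x_of d)); split.
  move=> [i1 t1] [i2 t2] /= /(conv_inj (xL _) (xL _)) e.
  have ei : idx (Tagged _ t1) = idx (Tagged _ t2).
    apply/eqP; rewrite -(nth_uniq (0,0) _ _ (uniq_Lst k)) ?szL; first exact/eqP.
      by case: (idxP (Tagged _ t1)).
    by case: (idxP (Tagged _ t2)).
  have e12 : i1 = i2.
    apply/val_inj; have [_ a] := idxP (Tagged _ t1); have [_ c] := idxP (Tagged _ t2).
    by rewrite /= -a -c ei.
  subst i2; congr Tagged; apply/val_inj/eqP.
  rewrite -(nth_uniq 0 _ _ (ufilt i1)) ?sfilt ?ltn_ord //; exact/eqP.
move=> d; have [a1 a2] := convK (xL d); rewrite a1 a2.
have /andP[c1 c2] := xP d; split => //.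
by rewrite -ltnS prednK // (leq_ltn_trans (leq0n _) c2).
Qed.

Lemma match_ps : matching_seq b -> \sum_(i < n) b i = 'C(k, 2) -> exists ps, PS ps.
Proof.
move=> [f [finj hf]] hb.
pose A := [set u : 'I_n * 'I_n | u.1 <= u.2].
have uLU : uniq (map conv (Lst k)) by rewrite (map_inj_in_uniq conv_inj) uniq_Lst.
have memLU : forall u, (u \in map conv (Lst k)) = (u \in A).
  move=> u; rewrite [in RHS]inE; apply/mapP/idP.
    move=> [x xL ->]; have [a1 a2] := convK xL; rewrite a1 a2.
    have [x1 _] := Lst_bound xL; by rewrite -ltnS prednK // (leq_ltn_trans (leq0n _) x1).
  move=> h; exists (val u.1, (val u.2).+1).
    by rewrite mem_Lst /= ltnS h /= ltnS ltn_ord.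
  by case: u h => a c _; rewrite /conv /= !inord_val.
have cardA : #|A| = 'C(k, 2).
  rewrite -size_Lst -(size_map conv) -(card_uniqP uLU).
  by apply: eq_card => u; rewrite memLU.
have imA : f @: setT = A.
  apply/eqP; rewrite eqEcard; apply/andP; split.
    apply/subsetP => u /imsetP [d _ ->]; rewrite inE.
    by have [h1 h2] := hf d; exact: leq_trans h1 h2.
  by rewrite cardA card_imset // cardsT tagnat.card hb.
have surj : forall u, u \in A -> exists d, f d = u.
  by move=> u; rewrite -imA => /imsetP [d _ ->]; exists d.
pose h u := oapp (fun d : {i : 'I_n & 'I_(b i)} => val (tag d)) 0 [pick d | f d == u].
have hK : forall d, h (f d) = tag d.
  move=> d; rewrite /h; case: pickP => [d' /eqP e|none]; first by rewrite (finj _ _ e).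
  by have := none d; rewrite eqxx.
exists (map (h \o conv) (Lst k)); split.
  rewrite all2_map_r; apply/allP => x xL /=.
  have [d fd] : exists d, f d = conv x by apply: surj; rewrite -memLU map_f.
  rewrite -fd hK; have [c1 c2] := hf d; rewrite fd in c1 c2.
  have [a1 a2] := convK xL; rewrite a1 in c1; rewrite a2 in c2.
  have [x1 _] := Lst_bound xL.
  rewrite c1 /=; apply: (leq_ltn_trans c2).
  by rewrite ltn_predL (leq_ltn_trans (leq0n _) x1).
move=> q; rewrite map_comp count_map.
rewrite -size_filter -(card_uniqP (filter_uniq _ uLU)).
rewrite -(fiber_card q) -(card_imset _ finj).
apply: eq_card => u; rewrite mem_filter memLU /=; apply/andP/imsetP.
  move=> [hq uA]; have [d fd] := surj u uA; exists d => //.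
  by rewrite inE; apply/eqP/val_inj; rewrite /= -(eqP hq) -fd hK.
move=> [d dS ->]; split; last by rewrite -imA; apply: imset_f; rewrite inE.
by rewrite hK; move: dS; rewrite inE => /eqP ->.
Qed.

End Main.

End MPart.
Import MPart.

Local Open Scope ring_scope.

Theorem mainTheorem7 (k : nat) (hk : (2 <= k)%N) (b : 'I_k.-1 -> nat)
  (hb : (\sum_(i < k.-1) b i)%N = 'C(k, 2)) :
  [<-> perfect_matching_seq b;
       mp_coef (Vpoly k) [ffun i => b i] != 0;
       forall s t : 'I_k.-1, (s <= t)%N ->
         ('C(t - s + 2, 2) <= \sum_(i < k.-1 | (s <= i <= t)%N) b i)%N].
Proof.
case: k hk b hb => [|[|k']] // _ b hb.
split; [|split].
- move=> [hm _]; have [ps hps] := match_ps hm hb.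
  by apply/poly_iff; exists ps.
- by move/poly_iff => [ps hps]; exact: ps_iii hps.
- move=> h3; have [ps hps] := iii_ps hb h3.
  by split; [exact: ps_match hps | exact: hb].
Qed.
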